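(* Let $p$ be prime with $X_0(p)$ of genus $g\ge1$. For $q,q'\in D(0,0.01)$ one has $|\mu_\infty(q')-\mu_\infty(q)|_\infty\le 7|q'-q|$, and for $q,q'\in D(0,1-\frac{1}{2p})$ one has $|\mu_0(q')-\mu_0(q)|_\infty\le 96p^4|q'-q|$. In particular the Jacobi integration map is Lipschitz on $D_\infty=D(0,0.005)$ with constant at most $7$ and on $D_0=D(0,1-1/p)$ with constant at most $96p^4$.
   Context: For $\tau$ in the upper half plane put $q_\infty=\exp(2i\pi\tau)$, $q_0=\exp(-2i\pi/(p\tau))$. $\mathcal D_1$ is the set of differentials $\omega=f(q)\,dq/q$ on $X_0(p)$, with $f=\sum_{k\ge1}a_kq^k$ running over the weight-2 cusp forms on $\Gamma_0(p)$ that are Hecke eigenforms with $a_1=1$; each such $\omega$ equals $\frac{f(q_\infty)}{q_\infty}dq_\infty$ and also $\pm\frac{f(q_0)}{q_0}dq_0$ (Atkin–Lehner eigenvalue $\pm1$). The Jacobi maps on the discs are $\mu_\infty(q)=(\int^{q}\omega)_{\omega\in\mathcal D_1}$ (integration in the coordinate $q_\infty$) and $\mu_0(q)=(\int^{q}\omega)_{\omega\in\mathcal D_1}$ (integration in the coordinate $q_0$), defined up to a common additive constant (choice of a base point); so $\mu_\infty(q')-\mu_\infty(q)=(\int_q^{q'}\frac{f(t)}{t}dt)_\omega$, and similarly for $\mu_0$ with the signs $\pm$. $\mathbb C^{\mathcal D_1}$ carries the sup norm $|\cdot|_\infty$ in its canonical basis. *)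

(* Defs.v *)
From Stdlib Require Import Reals ZArith Znumtheory Arith.
From Stdlib Require Import ClassicalDescription.
From Coquelicot Require Import Coquelicot.
Open Scope R_scope.

Definition cexp (z : C) : C := (exp (Re z) * cos (Im z), exp (Re z) * sin (Im z)).

Definition csum (u : nat -> C) : C := (Series (fun k => Re (u k)), Series (fun k => Im (u k))).

Open Scope C_scope.
Definition q_inf (tau : C) : C := cexp (2 * PI * Ci * tau).

Definition fH (a : nat -> C) (tau : C) : C := csum (fun k => a k * (q_inf tau) ^ k).

(** Weight-2 cusp form on Gamma_0(p), given by its q-expansion at infinity. *)
Definition is_cusp_form_wt2 (p : nat) (a : nat -> C) : Prop :=
  a 0%nat = 0 /\
  (forall q : C, (Cmod q < 1)%R -> ex_series (fun k => a k * q ^ k)) /\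
  (forall (A B Cc D : Z), (A * D - B * Cc = 1)%Z -> Z.divide (Z.of_nat p) Cc ->
     forall tau : C, (0 < Im tau)%R ->
       fH a ((IZR A * tau + IZR B) / (IZR Cc * tau + IZR D))
       = (IZR Cc * tau + IZR D) ^ 2 * fH a tau) /\
  (* vanishing at the cusp 0 (width p): tau^{-2} f(-1/tau) = sum_{k>=1} b_k exp(2 i pi k tau / p) *)
  (exists b : nat -> C, b 0%nat = 0 /\
     forall tau : C, (0 < Im tau)%R ->
       is_series (fun k => b k * (cexp (2 * PI * Ci * tau / INR p)) ^ k)
                 (fH a (- / tau) / tau ^ 2)).

(** Coefficient n of T_l f (l prime): T_l for l not dividing p, U_p for l = p. *)
Definition hecke_coef (p l : nat) (a : nat -> C) (n : nat) : C :=
  a (n * l)%nat +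
  (if (Nat.eqb (p mod l) 0) then 0
   else if Nat.eqb (n mod l) 0 then INR l * a (n / l)%nat else 0).

Definition is_D1 (p : nat) (a : nat -> C) : Prop :=
  is_cusp_form_wt2 p a /\ a 1%nat = 1 /\
  (forall l : nat, prime (Z.of_nat l) ->
     exists lam : C, forall n : nat, hecke_coef p l a n = lam * a n).

(** Genus of X_0(p), p prime: 12 g = (p+1) - 3 nu_2 - 4 nu_3. *)
Definition nu2 (p : nat) : nat :=
  if Nat.eqb p 2 then 1 else if Nat.eqb (p mod 4) 1 then 2 else 0.
Definition nu3 (p : nat) : nat :=
  if Nat.eqb p 3 then 1 else if Nat.eqb (p mod 3) 1 then 2 else 0.
Definition genus_X0 (p : nat) : nat := ((p + 1 - 3 * nu2 p - 4 * nu3 p) / 12)%nat.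

(** Jacobi map components (base point 0): the primitive of f(t)/t dt in the
    coordinate q_oo, i.e. sum_{k>=1} a_k q^k / k. *)
Definition mu_inf (a : nat -> C) (q : C) : C := csum (fun k => a k / INR k * q ^ k).

(** Atkin-Lehner sign: omega = eps * f(q_0)/q_0 dq_0, i.e.
    f(-1/(p tau)) = eps * p * tau^2 * f(tau). *)
Definition al_sign (p : nat) (a : nat -> C) : R :=
  if excluded_middle_informative
       (forall tau : C, (0 < Im tau)%R ->
          fH a (- / (INR p * tau)) = INR p * tau ^ 2 * fH a tau)
  then 1%R else (-1)%R.

(** Component of mu_0: integration of omega = eps f(q_0)/q_0 dq_0 in the coordinate q_0. *)
Definition mu_0 (p : nat) (a : nat -> C) (q : C) : C :=
  al_sign p a * csum (fun k => a k / INR k * q ^ k).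

(* Main.v *)
Require Import Defs.
From Stdlib Require Import Reals ZArith Znumtheory Arith Lia Lra Psatz Classical ClassicalDescription.
From Coquelicot Require Import Coquelicot.
Open Scope R_scope.

Lemma C_ext (z w : C) : Re z = Re w -> Im z = Im w -> z = w.
Proof. destruct z, w; unfold Re, Im; simpl; intros; subst; reflexivity. Qed.

Lemma cexp_add z w : cexp (z + w)%C = (cexp z * cexp w)%C.
Proof.
  destruct z as [a b], w as [c d]. unfold cexp; apply C_ext; simpl;
  rewrite exp_plus, ?cos_plus, ?sin_plus; ring.
Qed.

Lemma cexp_0 : cexp 0 = 1%C.
Proof. unfold cexp; apply C_ext; unfold Re, Im; simpl. all: rewrite exp_0, ?cos_0, ?sin_0; ring. Qed.

Lemma cexp_pow z n : (cexp z ^ n)%C = cexp (INR n * z)%C.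
Proof.
  induction n.
  - simpl. replace (RtoC 0 * z)%C with (RtoC 0) by ring. rewrite cexp_0. reflexivity.
  - change (cexp z * cexp z ^ n = cexp (INR (S n) * z))%C. rewrite IHn. rewrite <- cexp_add. f_equal. rewrite S_INR, RtoC_plus. ring.
Qed.

Lemma Cmod_cexp z : Cmod (cexp z) = exp (Re z).
Proof.
  unfold cexp, Cmod; cbn [fst snd].
  replace ((exp (Re z) * cos (Im z)) ^ 2 + (exp (Re z) * sin (Im z)) ^ 2)
    with (exp (Re z) ^ 2).
  - apply sqrt_pow2. left; apply exp_pos.
  - rewrite <- (Rmult_1_r (exp (Re z) ^ 2)). rewrite <- (sin2_cos2 (Im z)). unfold Rsqr. ring.
Qed.

Definition ee (x : C) : C := cexp (2 * PI * Ci * x)%C.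

Lemma ee_add x y : ee (x + y)%C = (ee x * ee y)%C.
Proof. unfold ee. rewrite <- cexp_add. f_equal. ring. Qed.

Lemma ee_pow x n : (ee x ^ n)%C = ee (INR n * x)%C.
Proof. unfold ee. rewrite cexp_pow. f_equal. ring. Qed.

Lemma Re_2PIi x : Re (2 * PI * Ci * x)%C = - 2 * PI * Im x.
Proof. destruct x; unfold Re, Im; simpl; ring. Qed.

Lemma Cmod_ee x : Cmod (ee x) = exp (- 2 * PI * Im x).
Proof. unfold ee. rewrite Cmod_cexp, Re_2PIi. reflexivity. Qed.

Lemma Im_2PIi x : Im (2 * PI * Ci * x)%C = 2 * PI * Re x.
Proof. destruct x; unfold Re, Im; simpl; ring. Qed.

Lemma ee_nat (m : nat) : ee (INR m) = 1%C.
Proof.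
  unfold ee, cexp. rewrite Re_2PIi, Im_2PIi, im_RtoC, re_RtoC.
  replace (-2 * PI * 0) with 0 by ring. rewrite exp_0.
  pose proof (cos_period 0 m) as H1. pose proof (sin_period 0 m) as H2.
  rewrite Rplus_0_l, cos_0 in H1. rewrite Rplus_0_l, sin_0 in H2.
  replace (2 * PI * INR m) with (2 * INR m * PI) by ring.
  rewrite H1, H2. apply C_ext; simpl; ring.
Qed.

Lemma is_series_C_iff (u : nat -> C) l :
  is_series u l <-> forall eps, 0 < eps -> exists N, forall n, (N <= n)%nat -> Cmod (sum_n u n - l)%C < eps.
Proof.
  unfold is_series. split.
  - intros H0 eps Heps. pose proof (proj1 (filterlim_locally _ _) H0) as H.
    assert (Hs2 : 0 < sqrt 2) by (apply sqrt_lt_R0; lra).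
    assert (Hs : 0 < eps / sqrt 2) by (apply Rdiv_lt_0_compat; lra).
    destruct (H (mkposreal _ Hs)) as [N HN]. exists N. intros n Hn.
    specialize (HN n Hn). apply C_NormedModule_mixin_compat2 in HN. simpl in HN.
    replace eps with (sqrt 2 * (eps / sqrt 2)) by (field; lra). exact HN.
  - intros H. apply (proj2 (filterlim_locally _ _)). intros eps. destruct (H eps (cond_pos eps)) as [N HN]. exists N. intros n Hn.
    apply C_NormedModule_mixin_compat1. exact (HN n Hn).
Qed.

Lemma is_series_R_iff (u : nat -> R) l :
  is_series u l <-> forall eps, 0 < eps -> exists N, forall n, (N <= n)%nat -> Rabs (sum_n u n - l) < eps.
Proof.
  assert (E : is_series u l <-> is_lim_seq (sum_n u) l) by (split; intro H; exact H).
  rewrite E, <- is_lim_seq_spec. simpl. split.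
  - intros H eps Heps. exact (H (mkposreal _ Heps)).
  - intros H eps. exact (H eps (cond_pos eps)).
Qed.

Lemma sum_n_Re (u : nat -> C) n : Re (sum_n u n) = sum_n (fun k => Re (u k)) n.
Proof.
  induction n.
  - rewrite !sum_O. reflexivity.
  - rewrite !sum_Sn, <- IHn. reflexivity.
Qed.

Lemma sum_n_Im (u : nat -> C) n : Im (sum_n u n) = sum_n (fun k => Im (u k)) n.
Proof.
  induction n.
  - rewrite !sum_O. reflexivity.
  - rewrite !sum_Sn, <- IHn. reflexivity.
Qed.

Lemma abs_Re_le z : Rabs (Re z) <= Cmod z.
Proof. apply re_le_Cmod. Qed.
Lemma abs_Im_le z : Rabs (Im z) <= Cmod z.
Proof.
  destruct z as [a b]. unfold Cmod, Im; simpl.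
  rewrite <- sqrt_Rsqr_abs. apply sqrt_le_1_alt. unfold Rsqr. nra.
Qed.

Lemma csum_is (u : nat -> C) l : is_series u l -> csum u = l.
Proof.
  intros H. rewrite is_series_C_iff in H. unfold csum. apply C_ext; simpl.
  - apply is_series_unique. apply is_series_R_iff. intros eps Heps.
    destruct (H eps Heps) as [N HN]. exists N. intros n Hn.
    rewrite <- sum_n_Re. eapply Rle_lt_trans; [|apply (HN n Hn)].
    replace (Re (sum_n u n) - Re l) with (Re (sum_n u n - l)%C) by (unfold Re; simpl; ring).
    apply abs_Re_le.
  - apply is_series_unique. apply is_series_R_iff. intros eps Heps.
    destruct (H eps Heps) as [N HN]. exists N. intros n Hn.
    rewrite <- sum_n_Im. eapply Rle_lt_trans; [|apply (HN n Hn)].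
    replace (Im (sum_n u n) - Im l) with (Im (sum_n u n - l)%C) by (unfold Im; simpl; ring).
    apply abs_Im_le.
Qed.

Lemma ex_csum (u : nat -> C) : ex_series u -> is_series u (csum u).
Proof. intros [l Hl]. rewrite (csum_is u l Hl). exact Hl. Qed.

Lemma is_series_C_unique (u : nat -> C) l1 l2 : is_series u l1 -> is_series u l2 -> l1 = l2.
Proof. intros H1 H2. rewrite <- (csum_is u l1 H1). apply csum_is; auto. Qed.

Lemma sum_n_Cmod (u : nat -> C) n : Cmod (sum_n u n) <= sum_n (fun k => Cmod (u k)) n.
Proof.
  induction n.
  - rewrite !sum_O. lra.
  - rewrite !sum_Sn. eapply Rle_trans; [apply Cmod_triangle|].
    change (plus (sum_n (fun k : nat => Cmod (u k)) n) (Cmod (u (S n)))) with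
      ((sum_n (fun k : nat => Cmod (u k)) n) + (Cmod (u (S n)))). lra.
Qed.

Lemma sum_n_le (u v : nat -> R) n : (forall k, u k <= v k) -> sum_n u n <= sum_n v n.
Proof.
  intros H. induction n.
  - rewrite !sum_O. auto.
  - rewrite !sum_Sn. change (sum_n u n + u (S n) <= sum_n v n + v (S n)). specialize (H (S n)). lra.
Qed.

Lemma sum_n_mono (v : nat -> R) n m : (forall k, 0 <= v k) -> (n <= m)%nat -> sum_n v n <= sum_n v m.
Proof.
  intros H Hnm. induction Hnm.
  - lra.
  - rewrite sum_Sn. change (sum_n v n <= sum_n v m + v (S m)). specialize (H (S m)). lra.
Qed.

Lemma sum_n_le_series (v : nat -> R) S n : (forall k, 0 <= v k) -> is_series v S -> sum_n v n <= S.
Proof.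
  intros Hp Hs. rewrite is_series_R_iff in Hs. apply Rle_plus_epsilon. intros eps He.
  destruct (Hs eps He) as [N HN]. specialize (HN (Nat.max n N) (Nat.le_max_r _ _)).
  pose proof (sum_n_mono v n (Nat.max n N) Hp (Nat.le_max_l _ _)).
  apply Rabs_def2 in HN. lra.
Qed.

Lemma Cmod_series_bound (u : nat -> C) (v : nat -> R) l B :
  is_series u l -> (forall k, Cmod (u k) <= v k) -> (forall n, sum_n v n <= B) -> Cmod l <= B.
Proof.
  intros Hs Huv HB. rewrite is_series_C_iff in Hs. apply Rle_plus_epsilon. intros eps He.
  destruct (Hs eps He) as [N HN]. specialize (HN N (Nat.le_refl _)).
  assert (H1 : Cmod (sum_n u N) <= B).
  { eapply Rle_trans; [apply sum_n_Cmod|]. eapply Rle_trans; [apply sum_n_le; exact Huv| apply HB]. }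
  replace l with (sum_n u N - (sum_n u N - l))%C by ring.
  eapply Rle_trans; [apply Cmod_triangle|]. rewrite Cmod_opp. lra.
Qed.

Lemma ex_series_bounded (v : nat -> R) B : (forall k, 0 <= v k) -> (forall n, sum_n v n <= B) -> ex_series v.
Proof.
  intros Hp HB. apply ex_series_Reals_1.
  apply growing_cv.
  - intros n. rewrite <- !sum_n_Reals. apply sum_n_mono; auto.
  - exists B. intros x [i ->]. rewrite <- sum_n_Reals. apply HB.
Qed.

Lemma terms_bounded (u : nat -> C) : ex_series u -> exists N, forall n, (N <= n)%nat -> Cmod (u n) <= 1.
Proof.
  intros [l Hl]. rewrite is_series_C_iff in Hl. destruct (Hl (1/2) ltac:(lra)) as [N HN].
  exists (S N). intros n Hn. destruct n as [|m]; [lia|].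
  assert (E : u (S m) = ((sum_n u (S m) - l) - (sum_n u m - l))%C).
  { rewrite sum_Sn. change (plus (sum_n u m) (u (S m))) with (sum_n u m + u (S m))%C. ring. }
  rewrite E. eapply Rle_trans; [apply Cmod_triangle|]. rewrite Cmod_opp.
  pose proof (HN (S m) ltac:(lia)). pose proof (HN m ltac:(lia)). lra.
Qed.

Lemma abs_inside (c : nat -> C) z rho :
  ex_series (fun k => (c k * z ^ k)%C) -> 0 <= rho < Cmod z ->
  ex_series (fun k => Cmod (c k) * rho ^ k).
Proof.
  intros Hs [H0 H1]. destruct (terms_bounded _ Hs) as [N HN].
  set (t := rho / Cmod z).
  assert (Ht : 0 <= t < 1).
  { assert (Hz : 0 < Cmod z) by lra. unfold t. split.
    - unfold Rdiv. apply Rmult_le_pos; [lra| left; apply Rinv_0_lt_compat; lra].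
    - apply (Rmult_lt_reg_r (Cmod z)); [lra|]. unfold Rdiv. rewrite Rmult_assoc, Rinv_l; lra. }
  apply (ex_series_incr_n _ N).
  apply (@ex_series_le R_AbsRing R_CompleteNormedModule _ (fun k => t ^ k * t ^ N)).
  - intros k. change (norm (Cmod (c (N + k)%nat) * rho ^ (N + k))) with
      (Rabs (Cmod (c (N + k)%nat) * rho ^ (N + k))).
    rewrite Rabs_pos_eq by (apply Rmult_le_pos; [apply Cmod_ge_0| apply pow_le; lra]).
    specialize (HN (N + k)%nat ltac:(lia)). rewrite Cmod_mult, Cmod_pow in HN.
    replace rho with (t * Cmod z) by (unfold t; field; lra).
    rewrite Rpow_mult_distr, <- pow_add.
    replace (k + N)%nat with (N + k)%nat by lia.
    assert (0 <= t ^ (N + k)) by (apply pow_le; lra).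
    nra.
  - apply ex_series_scal_r. apply ex_series_geom. rewrite Rabs_pos_eq; lra.
Qed.

Lemma ex_series_shift_d (c : nat -> C) (d : nat) rho :
  (forall k, (k < d)%nat -> c k = 0%C) -> 0 < rho ->
  ex_series (fun k => Cmod (c k) * rho ^ k) -> ex_series (fun k => Cmod (c k) * rho ^ (k - d)).
Proof.
  intros Hc Hr Hs. apply (ex_series_ext (fun k => Cmod (c k) * rho ^ k * / rho ^ d)).
  - intros k. change (Cmod (c k) * rho ^ k * / rho ^ d = Cmod (c k) * rho ^ (k - d)).
    destruct (Nat.lt_ge_cases k d) as [Hk|Hk].
    + rewrite (Hc k Hk), Cmod_0. ring.
    + assert (E : rho ^ k = rho ^ d * rho ^ (k - d)) by (rewrite <- pow_add; f_equal; lia).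
      rewrite E. field. apply pow_nonzero; lra.
  - apply ex_series_scal_r. exact Hs.
Qed.

Lemma bound_disc (c : nat -> C) (d : nat) rho w l :
  (forall k, (k < d)%nat -> c k = 0%C) -> ex_series (fun k => Cmod (c k) * rho ^ (k - d)) ->
  Cmod w <= rho -> is_series (fun k => (c k * w ^ k)%C) l ->
  Cmod l <= Cmod w ^ d * Series (fun k => Cmod (c k) * rho ^ (k - d)).
Proof.
  intros Hc Hex Hw Hs.
  assert (Hw0 : 0 <= Cmod w) by apply Cmod_ge_0.
  apply (Cmod_series_bound _ (fun k => Cmod w ^ d * (Cmod (c k) * rho ^ (k - d)))  _ _ Hs).
  - intros k. destruct (Nat.lt_ge_cases k d) as [Hk|Hk].
    + rewrite (Hc k Hk), Cmult_0_l, Cmod_0, Rmult_0_l, Rmult_0_r. lra.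
    + rewrite Cmod_mult, Cmod_pow.
      assert (E : Cmod w ^ k = Cmod w ^ d * Cmod w ^ (k - d)) by (rewrite <- pow_add; f_equal; lia).
      rewrite E.
      assert (Hp : Cmod w ^ (k - d) <= rho ^ (k - d)) by (apply pow_incr; lra).
      assert (0 <= Cmod (c k)) by apply Cmod_ge_0.
      assert (0 <= Cmod w ^ d) by (apply pow_le; lra).
      assert (0 <= Cmod w ^ (k - d)) by (apply pow_le; lra).
      apply Rmult_le_compat_r with (r := Cmod w ^ d) in Hp; auto.
      apply Rmult_le_compat_l with (r := Cmod (c k)) in Hp; auto. nra.
  - intros n. rewrite (sum_n_mult_l (K := R_Ring)).
    change (mult (Cmod w ^ d) (sum_n (fun k : nat => Cmod (c k) * rho ^ (k - d)) n))
      with (Cmod w ^ d * (sum_n (fun k : nat => Cmod (c k) * rho ^ (k - d)) n)).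
    apply Rmult_le_compat_l. apply pow_le; auto.
    apply sum_n_le_series.
    + intros k. apply Rmult_le_pos; [apply Cmod_ge_0| apply pow_le; lra].
    + apply Series_correct. exact Hex.
Qed.

Definition mob (A B Cc D : Z) (tau : C) : C := ((IZR A * tau + IZR B) / (IZR Cc * tau + IZR D))%C.

Lemma det_R (A B Cc D : Z) : (A * D - B * Cc = 1)%Z -> IZR A * IZR D - IZR B * IZR Cc = 1.
Proof. intros H. rewrite <- !mult_IZR, <- minus_IZR, H. reflexivity. Qed.

Lemma den_nz (A B Cc D : Z) tau : (A * D - B * Cc = 1)%Z -> 0 < Im tau -> (IZR Cc * tau + IZR D)%C <> 0%C.
Proof.
  intros Hd Hy Heq. destruct tau as [x y]. unfold Im in Hy; simpl in Hy.
  assert (H1 : IZR Cc * y = 0) by (apply (f_equal Im) in Heq; unfold Im in Heq; simpl in Heq; lra).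
  assert (Hc : IZR Cc = 0) by nra.
  assert (H2 : IZR Cc * x + IZR D = 0) by (apply (f_equal Re) in Heq; unfold Re in Heq; simpl in Heq; lra).
  rewrite Hc in H2. apply det_R in Hd. rewrite Hc in Hd. nra.
Qed.

Lemma Cmod2 z : Cmod z ^ 2 = Re z ^ 2 + Im z ^ 2.
Proof. apply Cmod2_alt. Qed.

Lemma Im_mob (A B Cc D : Z) tau : (A * D - B * Cc = 1)%Z -> 0 < Im tau ->
  Im (mob A B Cc D tau) = Im tau / Cmod (IZR Cc * tau + IZR D)%C ^ 2.
Proof.
  intros Hd Hy. pose proof (den_nz A B Cc D tau Hd Hy) as Hn.
  pose proof (proj1 (Cmod_gt_0 _) Hn) as Hm.
  pose proof (Cmod2 (IZR Cc * tau + IZR D)%C) as E.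
  apply det_R in Hd.
  assert (Hpos : 0 < Cmod (IZR Cc * tau + IZR D)%C ^ 2) by (apply pow_lt; exact Hm).
  rewrite E in Hpos |- *. clear E Hm Hn.
  destruct tau as [x y]. unfold mob, Im, Re in *. simpl in *.
  field_simplify; try lra.
  replace (IZR A * y * IZR D - y * IZR B * IZR Cc) with (y * (IZR A * IZR D - IZR B * IZR Cc)) by ring.
  rewrite Hd. f_equal. ring.
Qed.

Lemma nat_min (P : nat -> Prop) n0 : P n0 -> exists n, P n /\ forall m, P m -> (n <= m)%nat.
Proof.
  induction n0 as [n0 IH] using lt_wf_ind. intros H.
  destruct (classic (exists m, P m /\ (m < n0)%nat)) as [[m [Hm Hlt]]|Hno].
  - exact (IH m Hlt Hm).
  - exists n0. split; auto. intros m Hm. destruct (Nat.lt_ge_cases m n0); auto.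
    exfalso; apply Hno; eauto.
Qed.

Lemma Im_mob_pos (A B Cc D : Z) tau : (A * D - B * Cc = 1)%Z -> 0 < Im tau -> 0 < Im (mob A B Cc D tau).
Proof.
  intros Hd Hy. rewrite (Im_mob A B Cc D tau Hd Hy). apply Rdiv_lt_0_compat; auto.
  apply pow_lt. apply Cmod_gt_0. apply (den_nz A B); auto.
Qed.

Lemma reduction tau : 0 < Im tau ->
  exists A B Cc D : Z, (A * D - B * Cc = 1)%Z /\ 1/2 < Im (mob A B Cc D tau).
Proof.
  intros Hy. set (y := Im tau) in *.
  set (m0 := Rmin (y^2) 1).
  assert (Hm0 : 0 < m0) by (apply Rmin_glb_lt; nra).
  destruct (archimed (2 / m0)) as [HN _].
  set (N := IZR (up (2 / m0))) in *.
  assert (H2m : 0 < 2 / m0) by (apply Rdiv_lt_0_compat; lra).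
  assert (HNm : N * m0 > 2).
  { apply (Rmult_gt_compat_r m0) in HN; auto. unfold Rdiv in HN. rewrite Rmult_assoc, Rinv_l in HN; lra. }
  set (Q := fun (c d : Z) => Cmod (IZR c * tau + IZR d)%C ^ 2).
  set (val := fun c d => Z.to_nat (up (N * Q c d))).
  set (P := fun n => exists A B c d, (A * d - B * c = 1)%Z /\ n = val c d).
  assert (HP : P (val 0%Z 1%Z)) by (exists 1%Z, 0%Z, 0%Z, 1%Z; split; [reflexivity| reflexivity]).
  destruct (nat_min P _ HP) as [n [[A [B [Cc [D [Hdet Hn]]]]] Hmin]].
  exists A, B, Cc, D. split; auto.
  assert (HQ : forall A0 B0 c d, (A0 * d - B0 * c = 1)%Z -> m0 <= Q c d).
  { intros A0 B0 c d Hd. unfold Q. rewrite Cmod2.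
    replace (Im (IZR c * tau + IZR d)%C) with (IZR c * y) by (unfold y; destruct tau; unfold Im; simpl; ring).
    destruct (Z.eq_dec c 0) as [Hc|Hc].
    - subst c. assert (Hd1 : (d = 1 \/ d = -1)%Z).
      { rewrite Z.mul_0_r, Z.sub_0_r, Z.mul_comm in Hd. apply Z.eq_mul_1 in Hd. lia. }
      assert (E : IZR d ^ 2 = 1) by (destruct Hd1 as [-> | ->]; simpl; ring).
      replace (Re (IZR 0 * tau + IZR d)%C) with (IZR d) by (destruct tau; unfold Re; simpl; ring).
      unfold m0. pose proof (Rmin_r (y^2) 1). nra.
    - assert (Hc2 : (1 <= c * c)%Z) by nia.
      apply IZR_le in Hc2. rewrite mult_IZR in Hc2.
      unfold m0. pose proof (Rmin_l (y^2) 1).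
      assert (0 <= Re (IZR c * tau + IZR d)%C ^ 2) by (apply pow2_ge_0).
      assert (H3: y^2 <= (IZR c * y)^2).
      { replace ((IZR c * y)^2) with ((IZR c * IZR c) * y^2) by ring.
        pose proof (pow2_ge_0 y). nra. }
      lra. }
  assert (HQpos : forall A0 B0 c d, (A0 * d - B0 * c = 1)%Z -> 0 < N * Q c d).
  { intros. pose proof (HQ _ _ _ _ H). nra. }
  assert (Hval : forall A0 B0 c d, (A0 * d - B0 * c = 1)%Z -> N * Q Cc D - 1 < N * Q c d).
  { intros A0 B0 c d Hd. assert (Hle : (n <= val c d)%nat) by (apply Hmin; exists A0, B0, c, d; auto).
    rewrite Hn in Hle. unfold val in Hle.
    pose proof (HQpos _ _ _ _ Hd) as P1. pose proof (HQpos _ _ _ _ Hdet) as P2.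
    destruct (archimed (N * Q c d)) as [U1 U2]. destruct (archimed (N * Q Cc D)) as [V1 V2].
    assert (Hz : (up (N * Q Cc D) <= up (N * Q c d))%Z).
    { apply Z2Nat.inj_le; auto; apply le_IZR; lra. }
    apply IZR_le in Hz. lra. }
  set (z := mob A B Cc D tau).
  set (k := (up (Re z + /2) - 1)%Z).
  assert (Hk : Re z - /2 < IZR k <= Re z + /2).
  { destruct (archimed (Re z + /2)) as [W1 W2]. unfold k. rewrite minus_IZR. lra. }
  set (A' := (A - k * Cc)%Z). set (B' := (B - k * D)%Z).
  assert (Hdet' : ((- Cc) * B' - (- D) * A' = 1)%Z) by (unfold A', B'; rewrite <- Hdet; ring).
  specialize (Hval _ _ _ _ Hdet').
  assert (Hnz := den_nz A B Cc D tau Hdet Hy).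
  assert (EQ : Q A' B' = Cmod (z - IZR k)%C ^ 2 * Q Cc D).
  { unfold Q. rewrite <- Rpow_mult_distr, <- Cmod_mult. f_equal. f_equal.
    unfold z, mob, A', B'. rewrite !minus_IZR, !mult_IZR, !RtoC_minus, !RtoC_mult.
    field. exact Hnz. }
  rewrite EQ in Hval.
  pose proof (HQpos _ _ _ _ Hdet) as HQ1. pose proof (HQ _ _ _ _ Hdet) as HQ2.
  assert (Ht : 1/2 < Cmod (z - IZR k)%C ^ 2).
  { assert (N * Q Cc D > 2) by nra. nra. }
  rewrite Cmod2 in Ht.
  replace (Re (z - IZR k)%C) with (Re z - IZR k) in Ht by (unfold Re; simpl; ring).
  replace (Im (z - IZR k)%C) with (Im z) in Ht by (unfold Im; simpl; ring).
  assert (Hzp : 0 < Im z) by (apply Im_mob_pos; auto).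
  fold z. nra.
Qed.

Lemma exp_le x y : x <= y -> exp x <= exp y.
Proof. intros [H|H]. left; apply exp_increasing; auto. subst; lra. Qed.

Lemma PI_gt_2 : 2 < PI.
Proof. pose proof PI2_1. lra. Qed.

Lemma y_exp_bound y c : 0 < c -> 0 < y -> y * exp (- c * y) <= / c.
Proof.
  intros Hc Hy. pose proof (exp_ineq1_le (c * y)) as H.
  replace (- c * y) with (- (c * y)) by ring. rewrite exp_Ropp.
  assert (Hp : 0 < exp (c * y)) by apply exp_pos.
  apply (Rmult_le_reg_r (c * exp (c * y))). apply Rmult_lt_0_compat; lra.
  replace (y * / exp (c * y) * (c * exp (c * y))) with (c * y) by (field; lra).
  replace (/ c * (c * exp (c * y))) with (exp (c * y)) by (field; lra). lra.
Qed.

Definition FF (a : nat -> C) (tau : C) : R := Im tau * Cmod (fH a tau).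

Lemma q_inf_ee tau : q_inf tau = ee tau.
Proof. reflexivity. Qed.

Lemma Cmod_q_inf_lt tau : 0 < Im tau -> Cmod (q_inf tau) < 1.
Proof.
  intros H. rewrite q_inf_ee, Cmod_ee. rewrite <- exp_0. apply exp_increasing.
  pose proof PI_RGT_0. nra.
Qed.

Lemma fH_series p a tau : is_cusp_form_wt2 p a -> 0 < Im tau ->
  is_series (fun k => (a k * q_inf tau ^ k)%C) (fH a tau).
Proof.
  intros [_ [Hex _]] Hy. unfold fH. apply ex_csum. apply Hex. apply Cmod_q_inf_lt; auto.
Qed.

Lemma FF_inv p a (A B Cc D : Z) tau : is_cusp_form_wt2 p a -> (A * D - B * Cc = 1)%Z ->
  (Z.of_nat p | Cc)%Z -> 0 < Im tau -> FF a (mob A B Cc D tau) = FF a tau.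
Proof.
  intros Hcf Hd Hp Hy. destruct Hcf as [_ [_ [Hmod _]]].
  unfold FF. rewrite (Im_mob A B Cc D tau Hd Hy).
  unfold mob. rewrite (Hmod A B Cc D Hd Hp tau Hy).
  rewrite Cmod_mult, Cmod_pow.
  assert (0 < Cmod (IZR Cc * tau + IZR D)%C) by (apply Cmod_gt_0; apply (den_nz A B); auto).
  field. lra.
Qed.

Lemma series_pos_ge0 (v : nat -> R) : (forall k, 0 <= v k) -> ex_series v -> 0 <= Series v.
Proof.
  intros H Hs. eapply Rle_trans; [| apply (sum_n_le_series v _ 0 H (Series_correct _ Hs))].
  rewrite sum_O. apply H.
Qed.

Lemma cusp_inf_bound p a : is_cusp_form_wt2 p a ->
  exists M, 0 <= M /\ forall tau, 1/2 <= Im tau -> FF a tau <= M.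
Proof.
  intros Hcf. pose proof Hcf as [Ha0 [Hex _]].
  set (rho := exp (- PI)).
  assert (Hrho : 0 < rho < 1/2).
  { split. apply exp_pos. unfold rho. rewrite exp_Ropp.
    pose proof (exp_ineq1_le PI). pose proof PI_gt_2.
    apply (Rmult_lt_reg_r (exp PI)). apply exp_pos. rewrite Rinv_l. lra.
    pose proof (exp_pos PI); lra. }
  assert (Hz : Cmod (RtoC (1/2)) < 1) by (rewrite Cmod_R, Rabs_pos_eq; lra).
  pose proof (abs_inside a (RtoC (1/2)) rho (Hex _ Hz)) as H1.
  rewrite Cmod_R, Rabs_pos_eq in H1 by lra.
  specialize (H1 ltac:(lra)).
  assert (Hc0 : forall k, (k < 1)%nat -> a k = 0%C) by (intros k Hk; replace k with 0%nat by lia; exact Ha0).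
  pose proof (ex_series_shift_d a 1 rho Hc0 ltac:(lra) H1) as H2.
  set (K := Series (fun k => Cmod (a k) * rho ^ (k - 1))).
  assert (HK : 0 <= K).
  { apply series_pos_ge0; auto. intros k. apply Rmult_le_pos; [apply Cmod_ge_0| apply pow_le; lra]. }
  exists K. split; auto. intros tau Htau.
  assert (Hy : 0 < Im tau) by lra.
  assert (Hq : Cmod (q_inf tau) <= rho).
  { rewrite q_inf_ee, Cmod_ee. unfold rho. apply exp_le. pose proof PI_RGT_0. nra. }
  pose proof (bound_disc a 1 rho (q_inf tau) (fH a tau) Hc0 H2 Hq (fH_series p a tau Hcf Hy)) as H3.
  fold K in H3. simpl in H3. rewrite Rmult_1_r in H3.
  unfold FF. rewrite q_inf_ee, Cmod_ee in H3.
  pose proof (y_exp_bound (Im tau) (2 * PI) ltac:(pose proof PI_RGT_0; lra) Hy) as H4.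
  replace (- 2 * PI * Im tau) with (- (2 * PI) * Im tau) in H3 by ring.
  assert (H5 : / (2 * PI) <= 1) by (pose proof PI_gt_2; apply (Rmult_le_reg_r (2 * PI)); [lra|]; rewrite Rinv_l; lra).
  assert (0 <= Cmod (fH a tau)) by apply Cmod_ge_0.
  assert (0 <= exp (- (2 * PI) * Im tau)) by (left; apply exp_pos).
  apply Rle_trans with (Im tau * (exp (- (2 * PI) * Im tau) * K)).
  - apply Rmult_le_compat_l; lra.
  - rewrite <- Rmult_assoc. nra.
Qed.

Lemma Re_div_R z r : r <> 0 -> Re (z / RtoC r)%C = Re z / r.
Proof. intros H. destruct z as [x y]. unfold Re, Cdiv, Cinv, Cmult; simpl. field. auto. Qed.

Lemma Im_div_R z r : r <> 0 -> Im (z / RtoC r)%C = Im z / r.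
Proof. intros H. destruct z as [x y]. unfold Im, Cdiv, Cinv, Cmult; simpl. field. auto. Qed.

Definition ep (p : nat) (tau : C) : C := cexp (2 * PI * Ci * tau / INR p)%C.

Lemma Cmod_ep p tau : 0 < INR p -> Cmod (ep p tau) = exp (- (2 * PI / INR p) * Im tau).
Proof.
  intros Hp. unfold ep. rewrite Cmod_cexp, Re_div_R, Re_2PIi by lra. f_equal. field. lra.
Qed.

Lemma cusp0_bound p a : is_cusp_form_wt2 p a -> 0 < INR p ->
  exists M, 0 <= M /\ forall w, 1/2 <= Im w -> Im w * Cmod (fH a (- / w) / w ^ 2)%C <= M.
Proof.
  intros Hcf Hp. destruct Hcf as [_ [_ [_ [b [Hb0 Hb]]]]].
  assert (Hc : 0 < 2 * PI / INR p) by (apply Rdiv_lt_0_compat; [pose proof PI_RGT_0; lra | lra]).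
  set (rho := exp (- (2 * PI / INR p) * / 2)).
  set (tau0 := (0, /4) : C).
  assert (Ht0 : 0 < Im tau0) by (unfold tau0, Im; simpl; lra).
  pose proof (Hb tau0 Ht0) as Hs0.
  assert (Hrho : 0 <= rho < Cmod (ep p tau0)).
  { split. left; apply exp_pos. rewrite Cmod_ep by auto. apply exp_increasing.
    unfold tau0, Im; simpl. nra. }
  pose proof (abs_inside b (ep p tau0) rho (ex_intro _ _ Hs0) Hrho) as H1.
  assert (Hc0 : forall k, (k < 1)%nat -> b k = 0%C) by (intros k Hk; replace k with 0%nat by lia; exact Hb0).
  assert (Hrp : 0 < rho) by apply exp_pos.
  pose proof (ex_series_shift_d b 1 rho Hc0 Hrp H1) as H2.
  set (K := Series (fun k => Cmod (b k) * rho ^ (k - 1))).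
  assert (HK : 0 <= K).
  { apply series_pos_ge0; auto. intros k. apply Rmult_le_pos; [apply Cmod_ge_0| apply pow_le; lra]. }
  exists (INR p * K). split; [apply Rmult_le_pos; lra|]. intros w Hw.
  assert (Hy : 0 < Im w) by lra.
  assert (Hq : Cmod (ep p w) <= rho).
  { rewrite Cmod_ep by auto. unfold rho. apply exp_le. nra. }
  pose proof (bound_disc b 1 rho (ep p w) _ Hc0 H2 Hq (Hb w Hy)) as H3.
  fold K in H3. rewrite pow_1 in H3.
  rewrite Cmod_ep in H3 by auto.
  pose proof (y_exp_bound (Im w) _ Hc Hy) as H4.
  assert (H5 : / (2 * PI / INR p) <= INR p).
  { replace (/ (2 * PI / INR p)) with (INR p / (2 * PI)) by (field; split; pose proof PI_RGT_0; lra).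
    pose proof PI_gt_2. apply (Rmult_le_reg_r (2 * PI)); [lra|].
    unfold Rdiv. rewrite Rmult_assoc, Rinv_l by lra. nra. }
  assert (0 <= Cmod (fH a (- / w) / w ^ 2)%C) by apply Cmod_ge_0.
  assert (0 <= exp (- (2 * PI / INR p) * Im w)) by (left; apply exp_pos).
  set (c := 2 * PI / INR p) in *. set (E := exp (- c * Im w)) in *.
  apply Rle_trans with (Im w * (E * K)).
  - apply Rmult_le_compat_l; lra.
  - rewrite <- Rmult_assoc. nra.
Qed.

Lemma Im_neg_inv (w : C) : w <> 0%C -> Im (- / w)%C = Im w / Cmod w ^ 2.
Proof.
  intros H. assert (Hp : 0 < Cmod w ^ 2) by (apply pow_lt; apply Cmod_gt_0; assumption).
  rewrite Cmod2 in *. destruct w as [x y]; unfold Im, Re in *; simpl in *. field. lra.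
Qed.

Lemma p_pos p : prime (Z.of_nat p) -> (2 <= p)%nat.
Proof. intros H. pose proof (prime_ge_2 _ H). lia. Qed.

Lemma FF_bounded p a : prime (Z.of_nat p) -> is_cusp_form_wt2 p a ->
  exists M, forall tau, 0 < Im tau -> FF a tau <= M.
Proof.
  intros Hpr Hcf.
  assert (Hp : 0 < INR p) by (apply lt_0_INR; pose proof (p_pos p Hpr); lia).
  destruct (cusp_inf_bound p a Hcf) as [M1 [HM1 HB1]].
  destruct (cusp0_bound p a Hcf Hp) as [M2 [HM2 HB2]].
  exists (Rmax M1 M2). intros tau Hy.
  destruct (reduction tau Hy) as [A [B [Cc [D [Hdet Hz]]]]].
  destruct (Zdivide_dec (Z.of_nat p) Cc) as [Hdiv|Hndiv].
  - rewrite <- (FF_inv p a A B Cc D tau Hcf Hdet Hdiv Hy). eapply Rle_trans; [apply HB1; lra| apply Rmax_l].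
  - apply (prime_rel_prime _ Hpr) in Hndiv. apply rel_prime_bezout in Hndiv. destruct Hndiv as [u v Huv].
    set (j := (- (A * v))%Z).
    set (A2 := (A + j * Cc)%Z). set (B2 := (B + j * D)%Z).
    assert (Hdet2 : ((- Cc) * B2 - (- D) * A2 = 1)%Z) by (unfold A2, B2; rewrite <- Hdet; ring).
    assert (Hdiv2 : (Z.of_nat p | A2)%Z).
    { exists (A * u)%Z. unfold A2, j. rewrite <- (Z.mul_1_r A) at 1. rewrite <- Huv. ring. }
    rewrite <- (FF_inv p a (-Cc) (-D) A2 B2 tau Hcf Hdet2 Hdiv2 Hy).
    set (z := mob A B Cc D tau) in *. set (w := (z + IZR j)%C).
    assert (Hw : Im w = Im z) by (unfold w, Im; simpl; ring).
    assert (Hwnz : w <> 0%C) by (intro H0; rewrite H0, im_RtoC in Hw; lra).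
    pose proof (den_nz A B Cc D tau Hdet Hy) as Hn1.
    pose proof (den_nz _ _ _ _ tau Hdet2 Hy) as Hn2.
    assert (Emob : mob (-Cc) (-D) A2 B2 tau = (- / w)%C).
    { assert (Ew : w = ((IZR A2 * tau + IZR B2) / (IZR Cc * tau + IZR D))%C).
      { unfold w, z, mob, A2, B2. rewrite !plus_IZR, !mult_IZR, !RtoC_plus, !RtoC_mult. field. auto. }
      rewrite Ew. unfold mob. rewrite !opp_IZR, !RtoC_opp. field. split; auto. }
    rewrite Emob. unfold FF. rewrite Im_neg_inv by auto.
    replace (fH a (-/w)) with (w^2 * (fH a (-/w) / w^2))%C by (field; auto).
    rewrite Cmod_mult, Cmod_pow.
    assert (0 < Cmod w) by (apply Cmod_gt_0; assumption).
    replace (Im w / Cmod w ^ 2 * (Cmod w ^ 2 * Cmod (fH a (- / w) / w ^ 2)%C))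
      with (Im w * Cmod (fH a (- / w) / w ^ 2)%C) by (field; lra).
    eapply Rle_trans; [apply HB2; lra| apply Rmax_r].
Qed.

Definition delta1 (k : nat) : C := if Nat.eqb k 1 then 1%C else 0%C.

Lemma is_series_delta1 (q : C) : is_series (fun k => (delta1 k * q ^ k)%C) q.
Proof.
  apply is_series_C_iff. intros eps He. exists 1%nat. intros n Hn.
  assert (E : forall m, sum_n (fun k => (delta1 k * q ^ k)%C) (S m) = q).
  { induction m.
    - rewrite sum_Sn, sum_O. unfold delta1. simpl.
      change (plus (0 * 1)%C (1 * (q * 1))%C) with ((0 * 1) + (1 * (q * 1)))%C. ring.
    - rewrite sum_Sn, IHm. unfold delta1. simpl.
      change (plus q (0 * (q * (q * q ^ m)))%C) with (q + (0 * (q * (q * q ^ m))))%C. ring. }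
  destruct n; [lia|]. rewrite E. replace (q - q)%C with (RtoC 0) by ring. rewrite Cmod_0. auto.
Qed.

Lemma FF_pos p a : is_cusp_form_wt2 p a -> a 1%nat = 1%C ->
  exists tau0, 0 < Im tau0 /\ 0 < FF a tau0.
Proof.
  intros Hcf Ha1. pose proof Hcf as [Ha0 [Hex _]].
  set (c := fun k => (a k - delta1 k)%C).
  set (rho := exp (- PI)).
  assert (Hrho : 0 < rho < 1/2).
  { split. apply exp_pos. unfold rho. rewrite exp_Ropp.
    pose proof (exp_ineq1_le PI). pose proof PI_gt_2.
    apply (Rmult_lt_reg_r (exp PI)). apply exp_pos. rewrite Rinv_l. lra.
    pose proof (exp_pos PI); lra. }
  assert (Hz : Cmod (RtoC (1/2)) < 1) by (rewrite Cmod_R, Rabs_pos_eq; lra).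
  pose proof (abs_inside a (RtoC (1/2)) rho (Hex _ Hz)) as H1.
  rewrite Cmod_R, Rabs_pos_eq in H1 by lra.
  specialize (H1 ltac:(lra)).
  assert (Hca : forall k, Cmod (c k) <= Cmod (a k)).
  { intros k. unfold c, delta1. destruct (Nat.eqb_spec k 1).
    - subst. rewrite Ha1. replace (1 - 1)%C with (RtoC 0) by ring. rewrite Cmod_0. apply Cmod_ge_0.
    - replace (a k - 0)%C with (a k) by ring. lra. }
  assert (H1c : ex_series (fun k => Cmod (c k) * rho ^ k)).
  { apply (@ex_series_le R_AbsRing R_CompleteNormedModule _ (fun k => Cmod (a k) * rho ^ k)); [| exact H1].
    intros k. change (norm (Cmod (c k) * rho ^ k)) with (Rabs (Cmod (c k) * rho ^ k)).
    rewrite Rabs_pos_eq by (apply Rmult_le_pos; [apply Cmod_ge_0| apply pow_le; lra]).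
    apply Rmult_le_compat_r; [apply pow_le; lra| apply Hca]. }
  assert (Hc0 : forall k, (k < 2)%nat -> c k = 0%C).
  { intros k Hk. unfold c, delta1. destruct k as [|[|k]]; [| |lia]; simpl.
    - rewrite Ha0. ring.
    - rewrite Ha1. ring. }
  pose proof (ex_series_shift_d c 2 rho Hc0 ltac:(lra) H1c) as H2.
  set (K := Series (fun k => Cmod (c k) * rho ^ (k - 2))).
  assert (HK : 0 <= K).
  { apply series_pos_ge0; auto. intros k; apply Rmult_le_pos; [apply Cmod_ge_0| apply pow_le; lra]. }
  set (tau0 := (0, K + 1) : C).
  assert (Hy : Im tau0 = K + 1) by reflexivity.
  exists tau0. split; [rewrite Hy; lra|].
  set (eps := exp (- 2 * PI * (K + 1))).
  assert (Hq : Cmod (q_inf tau0) = eps) by (rewrite q_inf_ee, Cmod_ee, Hy; reflexivity).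
  assert (Heps_pos : 0 < eps) by apply exp_pos.
  assert (Heps1 : eps <= rho).
  { unfold eps, rho. apply exp_le. pose proof PI_RGT_0. nra. }
  assert (Heps2 : eps * (2 * K + 2) <= 1).
  { unfold eps. replace (-2 * PI * (K+1)) with (- (2 * PI * (K+1))) by ring. rewrite exp_Ropp.
    pose proof (exp_ineq1_le (2 * PI * (K + 1))). pose proof PI_gt_2.
    assert (0 < exp (2 * PI * (K+1))) by apply exp_pos.
    apply (Rmult_le_reg_l (exp (2 * PI * (K + 1)))); auto. rewrite <- Rmult_assoc, Rinv_r by lra. nra. }
  assert (Hs : is_series (fun k => (c k * q_inf tau0 ^ k)%C) (fH a tau0 - q_inf tau0)%C).
  { pose proof (is_series_minus _ _ _ _ (fH_series p a tau0 Hcf ltac:(rewrite Hy; lra)) (is_series_delta1 (q_inf tau0))) as H3.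
    eapply is_series_ext; [| exact H3]. intros k. unfold c.
    change (@eq C ((a k * q_inf tau0 ^ k) + - (delta1 k * q_inf tau0 ^ k))%C
      ((a k - delta1 k) * q_inf tau0 ^ k)%C). ring. }
  assert (Hq' : Cmod (q_inf tau0) <= rho) by lra.
  pose proof (bound_disc c 2 rho (q_inf tau0) _ Hc0 H2 Hq' Hs) as H4.
  fold K in H4. rewrite Hq in H4.
  assert (Ht : Cmod (q_inf tau0) <= Cmod (fH a tau0) + Cmod (fH a tau0 - q_inf tau0)%C).
  { replace (q_inf tau0) with (fH a tau0 - (fH a tau0 - q_inf tau0))%C at 1 by ring.
    eapply Rle_trans; [apply Cmod_triangle|]. rewrite Cmod_opp. lra. }
  rewrite Hq in Ht. unfold FF. rewrite Hy.
  assert (H5 : eps ^ 2 * K <= eps * / 2) by nra.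
  assert (0 < Cmod (fH a tau0)) by nra.
  nra.
Qed.

Lemma sup_arg (G : C -> R) (P : C -> Prop) c K : 0 <= K ->
  (exists M, forall tau, P tau -> G tau <= M) ->
  (exists tau0, P tau0 /\ 0 < G tau0) ->
  (forall M, (forall tau, P tau -> G tau <= M) -> forall tau, P tau -> c * G tau <= K * M) ->
  c <= K.
Proof.
  intros HK [M0 HM0] [tau0 [HP0 HG0]] Hmain.
  set (E := fun r => exists tau, P tau /\ r = G tau).
  assert (Hb : bound E) by (exists M0; intros r [tau [HP ->]]; auto).
  assert (Hne : exists x, E x) by (exists (G tau0); exists tau0; auto).
  destruct (completeness E Hb Hne) as [m [Hub Hlub]].
  assert (Hm : forall tau, P tau -> G tau <= m) by (intros tau HP; apply Hub; exists tau; auto).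
  assert (Hmpos : 0 < m) by (pose proof (Hm tau0 HP0); lra).
  specialize (Hmain m Hm).
  destruct (Rle_or_lt c K) as [H|H]; auto. exfalso.
  assert (Hc : 0 < c) by lra.
  assert (Hub2 : is_upper_bound E (K * m / c)).
  { intros r [tau [HP ->]]. specialize (Hmain tau HP).
    apply (Rmult_le_reg_l c); auto. unfold Rdiv. rewrite <- Rmult_assoc, (Rmult_comm c (K * m)), Rmult_assoc, Rinv_r; lra. }
  specialize (Hlub _ Hub2).
  assert (m * c <= K * m).
  { apply (Rmult_le_compat_r c) in Hlub; [|lra]. unfold Rdiv in Hlub. rewrite Rmult_assoc, Rinv_l in Hlub; lra. }
  nra.
Qed.

Fixpoint sumC (g : nat -> C) (n : nat) : C :=
  match n with O => 0%C | S n => (sumC g n + g n)%C end.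

Lemma sum_n_zeroC n : sum_n (fun _ : nat => RtoC 0) n = RtoC 0.
Proof.
  induction n. rewrite sum_O; auto. rewrite sum_Sn, IHn.
  change (0 + 0)%C with (0 + 0)%C. apply C_ext; unfold Re, Im; simpl; ring.
Qed.

Lemma is_series_zeroC : is_series (fun _ : nat => RtoC 0) (RtoC 0).
Proof.
  apply is_series_C_iff. intros eps He. exists 0%nat. intros n _. rewrite sum_n_zeroC.
  replace (0 - 0)%C with (RtoC 0) by ring. rewrite Cmod_0. auto.
Qed.

Lemma is_series_sumC (u : nat -> nat -> C) (l : nat -> C) n :
  (forall j, (j < n)%nat -> is_series (u j) (l j)) ->
  is_series (fun k => sumC (fun j => u j k) n) (sumC l n).
Proof.
  induction n; intros H.
  - simpl. apply is_series_zeroC.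
  - simpl. pose proof (is_series_plus _ _ _ _ (IHn (fun j Hj => H j ltac:(lia))) (H n ltac:(lia))) as H2.
    exact H2.
Qed.

Lemma Cmod_sumC (g : nat -> C) n B : (forall j, (j < n)%nat -> Cmod (g j) <= B) -> Cmod (sumC g n) <= INR n * B.
Proof.
  induction n; intros H.
  - simpl. rewrite Cmod_0. lra.
  - simpl sumC. rewrite S_INR. eapply Rle_trans; [apply Cmod_triangle|].
    pose proof (IHn (fun j Hj => H j ltac:(lia))). pose proof (H n ltac:(lia)). lra.
Qed.

Lemma sumC_scal (X : C) (g : nat -> C) n : sumC (fun j => X * g j)%C n = (X * sumC g n)%C.
Proof. induction n; simpl. ring. rewrite IHn. ring. Qed.

Lemma sumC_one n : sumC (fun _ => 1%C) n = RtoC (INR n).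
Proof. induction n; simpl sumC. reflexivity. rewrite IHn, S_INR, RtoC_plus. reflexivity. Qed.

Lemma geom_sumC (z : C) n : ((z - 1) * sumC (fun j => z ^ j) n)%C = (z ^ n - 1)%C.
Proof. induction n; simpl sumC. simpl. ring. rewrite Cmult_plus_distr_l, IHn. simpl. ring. Qed.

Lemma Cpow_mul (x y : C) n : ((x * y) ^ n)%C = (x ^ n * y ^ n)%C.
Proof. induction n; simpl. ring. rewrite IHn. ring. Qed.

Lemma Cpow_add' (x : C) a b : (x ^ (a + b))%C = (x ^ a * x ^ b)%C.
Proof. induction a; simpl. ring. rewrite IHa. ring. Qed.

Lemma Cpow_pow (x : C) a b : ((x ^ a) ^ b)%C = (x ^ (a * b))%C.
Proof.
  induction b. simpl. rewrite Nat.mul_0_r. reflexivity.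
  replace (a * S b)%nat with (a + a * b)%nat by lia.
  simpl. rewrite IHb. rewrite Cpow_add'. reflexivity.
Qed.

Lemma ee_real (x : R) : ee (RtoC x) = (cos (2 * PI * x), sin (2 * PI * x)) :> C.
Proof.
  unfold ee, cexp. rewrite Re_2PIi, Im_2PIi, im_RtoC, re_RtoC.
  replace (-2 * PI * 0) with 0 by ring. rewrite exp_0. apply C_ext; unfold Re, Im; simpl; ring.
Qed.

Lemma ee_ne1 (r l : nat) : (0 < r < l)%nat -> ee (RtoC (INR r / INR l)) <> 1%C.
Proof.
  intros [H1 H2] H. rewrite ee_real in H.
  assert (Hs : sin (2 * PI * (INR r / INR l)) = 0) by (apply (f_equal Im) in H; unfold Im in H; simpl in H; exact H).
  assert (Hc : cos (2 * PI * (INR r / INR l)) = 1) by (apply (f_equal Re) in H; unfold Re in H; simpl in H; exact H).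
  apply sin_eq_0_0 in Hs. destruct Hs as [n Hn].
  assert (Hr : 0 < INR r) by (apply lt_0_INR; lia).
  assert (Hl : INR r < INR l) by (apply lt_INR; lia).
  pose proof PI_RGT_0.
  assert (Hn1 : IZR n = 2 * (INR r / INR l)).
  { apply (Rmult_eq_reg_r PI); [|lra]. rewrite <- Hn. ring. }
  assert (Hq0 : 0 < INR r / INR l) by (apply Rdiv_lt_0_compat; lra).
  assert (Hq1 : INR r / INR l < 1) by (apply (Rmult_lt_reg_r (INR l)); [lra|]; unfold Rdiv; rewrite Rmult_assoc, Rinv_l; lra).
  assert (Hz : n = 1%Z).
  { assert (0 < IZR n < 2) by lra. destruct H3 as [A1 A2].
    apply lt_IZR in A1. apply lt_IZR in A2. lia. }
  subst n. rewrite Hn in Hc. rewrite Rmult_1_l, cos_PI in Hc. lra.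
Qed.

Lemma sumC_ext (g h : nat -> C) n : (forall j, (j < n)%nat -> g j = h j) -> sumC g n = sumC h n.
Proof. induction n; intros H; simpl; auto. rewrite IHn, H; auto. Qed.

Lemma rootsum (l k : nat) : (1 <= l)%nat ->
  sumC (fun j => ee (RtoC (INR j / INR l)) ^ k)%C l = if Nat.eqb (k mod l) 0 then RtoC (INR l) else 0%C.
Proof.
  intros Hl. assert (Hl0 : 0 < INR l) by (apply lt_0_INR; lia).
  set (z := ee (RtoC (INR k / INR l))).
  assert (E1 : forall j, (ee (RtoC (INR j / INR l)) ^ k)%C = (z ^ j)%C).
  { intros j. unfold z. rewrite !ee_pow, <- !RtoC_mult. f_equal. f_equal. field. lra. }
  rewrite (sumC_ext _ _ l (fun j _ => E1 j)).
  assert (Hzl : (z ^ l)%C = 1%C).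
  { unfold z. rewrite ee_pow, <- RtoC_mult. replace (INR l * (INR k / INR l)) with (INR k) by (field; lra).
    apply ee_nat. }
  pose proof (Nat.div_mod_eq k l) as Hdm.
  destruct (Nat.eqb_spec (k mod l) 0) as [Hm|Hm].
  - assert (Hz1 : z = 1%C).
    { unfold z. replace (INR k / INR l) with (INR (k / l)).
      apply ee_nat. rewrite Hm, Nat.add_0_r in Hdm. rewrite Hdm at 2. rewrite mult_INR. field. lra. }
    rewrite Hz1. rewrite (sumC_ext _ (fun _ => 1%C) l (fun j _ => Cpow_1_l j)). apply sumC_one.
  - assert (Hr : (0 < k mod l < l)%nat) by (split; [lia| apply Nat.mod_upper_bound; lia]).
    assert (Hz1 : z <> 1%C).
    { unfold z. replace (INR k / INR l) with (INR (k / l) + INR (k mod l) / INR l).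
      - rewrite RtoC_plus, ee_add, ee_nat, Cmult_1_l. apply ee_ne1; auto.
      - rewrite Hdm at 3. rewrite plus_INR, mult_INR. field. lra. }
    pose proof (geom_sumC z l) as G. rewrite Hzl in G.
    assert (Hz2 : (z - 1)%C <> 0%C) by (intro H0; apply Hz1; apply Ceq_minus; exact H0).
    change (sumC (fun j => z ^ j) l = 0)%C.
    replace (sumC (fun j => z ^ j) l)%C with (/ (z - 1) * ((z - 1) * sumC (fun j => z ^ j) l))%C
      by (field; auto).
    rewrite G. ring.
Qed.

Definition spread (l : nat) (v : nat -> C) (n : nat) : C :=
  if Nat.eqb (n mod l) 0 then v (n / l)%nat else 0%C.

Lemma spread_at (l : nat) (v : nat -> C) (n m i : nat) : (n = l * m + i)%nat -> (i < l)%nat ->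
  spread l v n = if Nat.eqb i 0 then v m else 0%C.
Proof.
  intros Hn Hi. unfold spread.
  rewrite <- (Nat.mod_unique n l m i Hi Hn).
  rewrite <- (Nat.div_unique n l m i Hi Hn). reflexivity.
Qed.

Lemma spread_sum (l : nat) (v : nat -> C) (m r : nat) : (1 <= l)%nat -> (r < l)%nat -> sum_n (spread l v) (l * m + r) = sum_n v m.
Proof.
  intros Hl. revert r. induction m; intros r Hr.
  - induction r.
    + replace (l * 0 + 0)%nat with 0%nat by lia. rewrite !sum_O.
      rewrite (spread_at l v 0 0 0); auto; lia.
    + replace (l * 0 + S r)%nat with (S (l * 0 + r)) by lia. rewrite sum_Sn, IHr by lia.
      rewrite (spread_at l v _ 0 (S r)); [| lia | lia]. simpl.
      change (sum_n v 0 + 0 = sum_n v 0)%C. ring.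
  - induction r.
    + replace (l * S m + 0)%nat with (S (l * m + (l - 1))) by lia.
      rewrite sum_Sn, IHm by lia. rewrite (spread_at l v _ (S m) 0); [| lia | lia]. simpl.
      rewrite sum_Sn. reflexivity.
    + replace (l * S m + S r)%nat with (S (l * S m + r)) by lia. rewrite sum_Sn, IHr by lia.
      rewrite (spread_at l v _ (S m) (S r)); [| lia | lia]. simpl.
      change (sum_n v (S m) + 0 = sum_n v (S m))%C. ring.
Qed.

Lemma spread_iff (l : nat) (v : nat -> C) (S : C) : (1 <= l)%nat -> (is_series v S <-> is_series (spread l v) S).
Proof.
  intros Hl. rewrite !is_series_C_iff. split.
  - intros H eps He. destruct (H eps He) as [N HN]. exists (l * N)%nat. intros n Hn.
    assert (Hr : (n mod l < l)%nat) by (apply Nat.mod_upper_bound; lia).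
    pose proof (Nat.div_mod_eq n l) as Hdm.
    assert (Hq : (N <= n / l)%nat).
    { destruct (Nat.le_gt_cases N (n / l)) as [|Hc]; auto. exfalso.
      assert (l * (n / l) + n mod l < l * N)%nat by nia. lia. }
    rewrite Hdm. rewrite spread_sum; auto.
  - intros H eps He. destruct (H eps He) as [N HN]. exists N. intros m Hm.
    rewrite <- (spread_sum l v m 0) by lia. apply HN. nia.
Qed.

Lemma hecke_avg p a l tau : is_cusp_form_wt2 p a -> (1 <= l)%nat -> 0 < Im tau ->
  is_series (fun m => (a (l * m)%nat * q_inf tau ^ m)%C)
    (/ RtoC (INR l) * sumC (fun j => fH a ((tau + RtoC (INR j)) / RtoC (INR l))) l)%C.
Proof.
  intros Hcf Hl Hy.
  assert (Hl0 : 0 < INR l) by (apply lt_0_INR; lia).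
  assert (Hl0' : RtoC (INR l) <> 0%C) by (intro H; apply (f_equal Re) in H; unfold Re in H; simpl in H; lra).
  set (w := ee (tau / RtoC (INR l))%C).
  set (zeta := fun j : nat => ee (RtoC (INR j / INR l))).
  assert (Hq : forall j, q_inf ((tau + RtoC (INR j)) / RtoC (INR l))%C = (w * zeta j)%C).
  { intros j. rewrite q_inf_ee. unfold w, zeta. rewrite <- ee_add. f_equal.
    rewrite RtoC_div by lra. field. auto. }
  assert (Hs : forall j, (j < l)%nat -> is_series (fun k => (a k * w ^ k * zeta j ^ k)%C)
                   (fH a ((tau + RtoC (INR j)) / RtoC (INR l)))%C).
  { intros j _. eapply is_series_ext; [| apply (fH_series p a _ Hcf)].
    - intros k. simpl. rewrite Hq, Cpow_mul. change (@eq C (a k * (w ^ k * zeta j ^ k))%C (a k * w ^ k * zeta j ^ k)%C). ring.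
    - rewrite Im_div_R by lra. apply Rdiv_lt_0_compat; auto.
      replace (Im (tau + RtoC (INR j))%C) with (Im tau) by (unfold Im; simpl; ring). auto. }
  pose proof (is_series_sumC (fun j k => (a k * w ^ k * zeta j ^ k)%C) _ l Hs) as H1.
  assert (H2 : is_series (spread l (fun m => (RtoC (INR l) * a (l * m)%nat * q_inf tau ^ m)%C))
                 (sumC (fun j => fH a ((tau + RtoC (INR j)) / RtoC (INR l))) l)%C).
  { eapply is_series_ext; [| exact H1]. intros k. simpl.
    rewrite (sumC_scal (a k * w ^ k)%C (fun j => zeta j ^ k)%C l). unfold zeta. rewrite rootsum by auto.
    unfold spread. destruct (Nat.eqb_spec (k mod l) 0) as [Hm|Hm].
    - pose proof (Nat.div_mod_eq k l) as Hdm. rewrite Hm, Nat.add_0_r in Hdm.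
      assert (Hw : q_inf tau = (w ^ l)%C).
      { unfold w. rewrite ee_pow, q_inf_ee. f_equal. field. auto. }
      rewrite Hw, Cpow_pow, <- Hdm. change (@eq C (a k * w ^ k * RtoC (INR l))%C (RtoC (INR l) * a k * w ^ k)%C). ring.
    - change (@eq C (a k * w ^ k * 0)%C 0%C). ring. }
  apply spread_iff in H2; auto.
  pose proof (is_series_scal (/ RtoC (INR l))%C _ _ H2) as H3.
  eapply is_series_ext; [| exact H3]. intros m. simpl.
  change (@eq C (/ RtoC (INR l) * (RtoC (INR l) * a (l * m)%nat * q_inf tau ^ m))%C (a (l * m)%nat * q_inf tau ^ m)%C).
  field. auto.
Qed.

Lemma hecke_dil p a l tau : is_cusp_form_wt2 p a -> (1 <= l)%nat -> 0 < Im tau ->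
  is_series (spread l (fun m => (a m * q_inf tau ^ (l * m))%C)) (fH a (RtoC (INR l) * tau)%C).
Proof.
  intros Hcf Hl Hy. assert (Hl0 : 0 < INR l) by (apply lt_0_INR; lia).
  apply spread_iff; auto.
  eapply is_series_ext; [| apply (fH_series p a _ Hcf)].
  - intros m. simpl. rewrite !q_inf_ee, <- ee_pow, Cpow_pow. reflexivity.
  - rewrite im_scal_l. apply Rmult_lt_0_compat; auto.
Qed.

Lemma hecke_T p a l tau lam : is_cusp_form_wt2 p a -> (1 <= l)%nat -> 0 < Im tau ->
  (forall n, (a (n * l)%nat + (if Nat.eqb (n mod l) 0 then RtoC (INR l) * a (n / l)%nat else 0))%C = (lam * a n)%C) ->
  (lam * fH a tau = / RtoC (INR l) * sumC (fun j => fH a ((tau + RtoC (INR j)) / RtoC (INR l))) l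
                    + RtoC (INR l) * fH a (RtoC (INR l) * tau))%C.
Proof.
  intros Hcf Hl Hy Hh.
  pose proof (hecke_avg p a l tau Hcf Hl Hy) as S1.
  pose proof (is_series_scal (RtoC (INR l)) _ _ (hecke_dil p a l tau Hcf Hl Hy)) as S2.
  pose proof (is_series_plus _ _ _ _ S1 S2) as S3.
  pose proof (is_series_scal lam _ _ (fH_series p a tau Hcf Hy)) as S4.
  apply (is_series_C_unique (fun n => (lam * (a n * q_inf tau ^ n)))%C); [exact S4|].
  eapply is_series_ext; [| exact S3]. intros n. simpl.
  change (@eq C (a (l * n)%nat * q_inf tau ^ n + RtoC (INR l) * spread l (fun m => (a m * q_inf tau ^ (l * m))%C) n)%C
     (lam * (a n * q_inf tau ^ n))%C).
  rewrite Nat.mul_comm. specialize (Hh n). unfold spread.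
  destruct (Nat.eqb (n mod l) 0) eqn:E.
  - apply Nat.eqb_eq in E as Hm.
    pose proof (Nat.div_mod_eq n l) as Hdm. rewrite Hm, Nat.add_0_r in Hdm.
    rewrite <- Hdm.
    transitivity ((a (n * l)%nat + RtoC (INR l) * a (n / l)%nat) * q_inf tau ^ n)%C. ring.
    rewrite Hh. ring.
  - transitivity ((a (n * l)%nat + 0) * q_inf tau ^ n)%C. ring.
    rewrite Hh. ring.
Qed.

Lemma hecke_U p a l tau lam : is_cusp_form_wt2 p a -> (1 <= l)%nat -> 0 < Im tau ->
  (forall n, (a (n * l)%nat + 0)%C = (lam * a n)%C) ->
  (lam * fH a tau = / RtoC (INR l) * sumC (fun j => fH a ((tau + RtoC (INR j)) / RtoC (INR l))) l)%C.
Proof.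
  intros Hcf Hl Hy Hh.
  pose proof (hecke_avg p a l tau Hcf Hl Hy) as S1.
  pose proof (is_series_scal lam _ _ (fH_series p a tau Hcf Hy)) as S4.
  apply (is_series_C_unique (fun n => (lam * (a n * q_inf tau ^ n)))%C); [exact S4|].
  eapply is_series_ext; [| exact S1]. intros n. simpl.
  change (@eq C (a (l * n)%nat * q_inf tau ^ n)%C (lam * (a n * q_inf tau ^ n))%C).
  rewrite Nat.mul_comm. specialize (Hh n).
  transitivity ((a (n * l)%nat + 0) * q_inf tau ^ n)%C. ring.
  rewrite Hh. ring.
Qed.

Lemma FF_nonneg a tau : 0 < Im tau -> 0 <= FF a tau.
Proof. intros H. unfold FF. apply Rmult_le_pos; [lra| apply Cmod_ge_0]. Qed.

Lemma Cmod_INR (l : nat) : Cmod (RtoC (INR l)) = INR l.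
Proof. rewrite Cmod_R. apply Rabs_pos_eq. apply pos_INR. Qed.

Lemma avg_bound a l tau M : (1 <= l)%nat -> 0 < Im tau ->
  (forall t, 0 < Im t -> FF a t <= M) ->
  Im tau * Cmod (/ RtoC (INR l) * sumC (fun j => fH a ((tau + RtoC (INR j)) / RtoC (INR l))) l)%C <= INR l * M.
Proof.
  intros Hl Hy HM. assert (Hl0 : 0 < INR l) by (apply lt_0_INR; lia).
  assert (Hl0' : RtoC (INR l) <> 0%C) by (intro H; apply (f_equal Re) in H; unfold Re in H; simpl in H; lra).
  assert (Hj : forall j, (j < l)%nat -> Cmod (fH a ((tau + RtoC (INR j)) / RtoC (INR l)))%C <= INR l * M / Im tau).
  { intros j _. set (t := ((tau + RtoC (INR j)) / RtoC (INR l))%C).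
    assert (Ht : Im t = Im tau / INR l).
    { unfold t. rewrite Im_div_R by lra. f_equal. unfold Im; simpl; ring. }
    assert (Htp : 0 < Im t) by (rewrite Ht; apply Rdiv_lt_0_compat; auto).
    specialize (HM t Htp). unfold FF in HM. rewrite Ht in HM.
    apply (Rmult_le_reg_l (Im tau / INR l)); [apply Rdiv_lt_0_compat; auto|].
    replace (Im tau / INR l * (INR l * M / Im tau)) with M by (field; lra). exact HM. }
  pose proof (Cmod_sumC _ l _ Hj) as H1.
  rewrite Cmod_mult, Cmod_inv, Cmod_INR by auto.
  apply (Rmult_le_compat_l (Im tau * / INR l)) in H1; [| apply Rmult_le_pos; [lra| left; apply Rinv_0_lt_compat; lra]].
  replace (Im tau * / INR l * (INR l * (INR l * M / Im tau))) with (INR l * M) in H1 by (field; lra).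
  rewrite <- Rmult_assoc, (Rmult_comm (Im tau)). rewrite Rmult_assoc in H1 |- *. lra.
Qed.

Lemma dil_bound a l tau M : (1 <= l)%nat -> 0 < Im tau ->
  (forall t, 0 < Im t -> FF a t <= M) ->
  Im tau * Cmod (RtoC (INR l) * fH a (RtoC (INR l) * tau))%C <= M.
Proof.
  intros Hl Hy HM. assert (Hl0 : 0 < INR l) by (apply lt_0_INR; lia).
  assert (Ht : Im (RtoC (INR l) * tau)%C = INR l * Im tau) by apply im_scal_l.
  assert (Htp : 0 < Im (RtoC (INR l) * tau)%C) by (rewrite Ht; apply Rmult_lt_0_compat; auto).
  specialize (HM _ Htp). unfold FF in HM. rewrite Ht in HM.
  rewrite Cmod_mult, Cmod_INR. replace (Im tau * (INR l * Cmod (fH a (RtoC (INR l) * tau)%C)))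
    with (INR l * Im tau * Cmod (fH a (RtoC (INR l) * tau)%C)) by ring. exact HM.
Qed.

Lemma eig_T_bound p a l lam : prime (Z.of_nat p) -> is_cusp_form_wt2 p a -> a 1%nat = 1%C -> (1 <= l)%nat ->
  (forall n, (a (n * l)%nat + (if Nat.eqb (n mod l) 0 then RtoC (INR l) * a (n / l)%nat else 0))%C = (lam * a n)%C) ->
  Cmod lam <= INR l + 1.
Proof.
  intros Hpr Hcf Ha1 Hl Hh.
  apply (sup_arg (FF a) (fun t => 0 < Im t)).
  - pose proof (pos_INR l). lra.
  - apply (FF_bounded p a Hpr Hcf).
  - apply (FF_pos p a Hcf Ha1).
  - intros M HM tau Hy.
    pose proof (hecke_T p a l tau lam Hcf Hl Hy Hh) as E.
    unfold FF. rewrite <- Rmult_assoc, (Rmult_comm (Cmod lam)), Rmult_assoc, <- Cmod_mult, E.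
    eapply Rle_trans; [apply Rmult_le_compat_l; [lra| apply Cmod_triangle]|].
    rewrite Rmult_plus_distr_l.
    pose proof (avg_bound a l tau M Hl Hy HM). pose proof (dil_bound a l tau M Hl Hy HM). lra.
Qed.

Lemma eig_U_bound p a l lam : prime (Z.of_nat p) -> is_cusp_form_wt2 p a -> a 1%nat = 1%C -> (1 <= l)%nat ->
  (forall n, (a (n * l)%nat + 0)%C = (lam * a n)%C) ->
  Cmod lam <= INR l.
Proof.
  intros Hpr Hcf Ha1 Hl Hh.
  apply (sup_arg (FF a) (fun t => 0 < Im t)).
  - apply pos_INR.
  - apply (FF_bounded p a Hpr Hcf).
  - apply (FF_pos p a Hcf Ha1).
  - intros M HM tau Hy.
    pose proof (hecke_U p a l tau lam Hcf Hl Hy Hh) as E.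
    unfold FF. rewrite <- Rmult_assoc, (Rmult_comm (Cmod lam)), Rmult_assoc, <- Cmod_mult, E.
    apply (avg_bound a l tau M Hl Hy HM).
Qed.

Lemma prime_factor n : (2 <= n)%nat -> exists l m, prime (Z.of_nat l) /\ n = (m * l)%nat /\ (1 <= m)%nat.
Proof.
  induction n as [n IH] using lt_wf_ind. intros Hn.
  destruct (prime_dec (Z.of_nat n)) as [Hp|Hp].
  - exists n, 1%nat. split; auto. split; lia.
  - destruct (not_prime_divide (Z.of_nat n) ltac:(lia) Hp) as [d [Hd [c Hc]]].
    assert (Hc0 : (0 < c)%Z) by nia.
    destruct (IH (Z.to_nat d) ltac:(lia) ltac:(lia)) as [l [m0 [Hl [Hm0 Hm1]]]].
    exists l, (Z.to_nat c * m0)%nat. split; auto. split; [|nia].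
    apply Nat2Z.inj. rewrite Nat2Z.inj_mul, Nat2Z.inj_mul, Hc.
    assert (Z.of_nat (Z.to_nat d) = d) by lia. assert (Z.of_nat (Z.to_nat c) = c) by lia.
    rewrite H0. rewrite <- H. rewrite Hm0, Nat2Z.inj_mul. ring.
Qed.

Lemma coef_bound p a : prime (Z.of_nat p) -> is_D1 p a -> forall n, Cmod (a n) <= INR n ^ 2.
Proof.
  intros Hpr [Hcf [Ha1 Hhk]]. pose proof Hcf as [Ha0 _].
  intros n. induction n as [n IH] using lt_wf_ind.
  destruct n as [|[|n']].
  - rewrite Ha0, Cmod_0. simpl. lra.
  - rewrite Ha1, Cmod_1. simpl. lra.
  - set (n := S (S n')) in *.
    destruct (prime_factor n ltac:(unfold n; lia)) as [l [m [Hl [Hnm Hm]]]].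
    pose proof (prime_ge_2 _ Hl) as Hl2. assert (Hl2' : (2 <= l)%nat) by lia.
    assert (HmL : (m < n)%nat) by nia.
    pose proof (IH m HmL) as IHm.
    destruct (Hhk l Hl) as [lam Hlam].
    assert (HINRm : 1 <= INR m) by (apply (le_INR 1); lia).
    assert (HINRl : 2 <= INR l) by (apply (le_INR 2); lia).
    assert (Hnr : INR n = INR m * INR l) by (rewrite Hnm, mult_INR; reflexivity).
    destruct (Nat.eq_dec l p) as [Hlp|Hlp].
    + subst l.
      assert (Hh : forall n0, (a (n0 * p)%nat + 0)%C = (lam * a n0)%C).
      { intros n0. rewrite <- (Hlam n0). unfold hecke_coef. rewrite Nat.Div0.mod_same. reflexivity. }
      pose proof (eig_U_bound p a p lam Hpr Hcf Ha1 ltac:(lia) Hh) as Hb.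
      specialize (Hh m). rewrite Cplus_0_r in Hh. rewrite Hnm, Hh, Cmod_mult, mult_INR.
      assert (0 <= Cmod lam) by apply Cmod_ge_0. assert (0 <= Cmod (a m)) by apply Cmod_ge_0.
      apply Rle_trans with (INR p * INR m ^ 2). apply Rmult_le_compat; auto. nra.
    + assert (Hpl : Nat.eqb (p mod l) 0 = false).
      { apply Nat.eqb_neq. intro H0. pose proof (Nat.div_mod_eq p l) as Hdm. rewrite H0, Nat.add_0_r in Hdm.
        assert (Hdiv : (Z.of_nat l | Z.of_nat p)%Z) by (exists (Z.of_nat (p / l)); rewrite Hdm at 1; rewrite Nat2Z.inj_mul; ring).
        apply (prime_divisors _ Hpr) in Hdiv. pose proof (p_pos p Hpr). lia. }
      assert (Hh : forall n0, (a (n0 * l)%nat + (if Nat.eqb (n0 mod l) 0 then RtoC (INR l) * a (n0 / l)%nat else 0))%C = (lam * a n0)%C).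
      { intros n0. rewrite <- (Hlam n0). unfold hecke_coef. rewrite Hpl. reflexivity. }
      pose proof (eig_T_bound p a l lam Hpr Hcf Ha1 ltac:(lia) Hh) as Hb.
      specialize (Hh m).
      assert (0 <= Cmod lam) by apply Cmod_ge_0. assert (0 <= Cmod (a m)) by apply Cmod_ge_0.
      assert (Hlm : Cmod (lam * a m)%C <= (INR l + 1) * INR m ^ 2).
      { rewrite Cmod_mult. apply Rmult_le_compat; auto. }
      rewrite Hnm, mult_INR.
      destruct (Nat.eqb (m mod l) 0) eqn:E.
      * apply Nat.eqb_eq in E. pose proof (Nat.div_mod_eq m l) as Hdm. rewrite E, Nat.add_0_r in Hdm.
        set (k := (m / l)%nat) in *.
        assert (Hk : (k < n)%nat) by nia.
        pose proof (IH k Hk) as IHk.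
        assert (Hmk : INR m = INR l * INR k) by (rewrite Hdm at 1; rewrite mult_INR; reflexivity).
        assert (Ea : a (m * l)%nat = (lam * a m - RtoC (INR l) * a k)%C) by (rewrite <- Hh; ring).
        rewrite Ea. eapply Rle_trans; [apply Cmod_triangle|]. rewrite Cmod_opp, (Cmod_mult (RtoC (INR l))), Cmod_INR.
        assert (0 <= Cmod (a k)) by apply Cmod_ge_0.
        assert (HINRk : 0 <= INR k) by apply pos_INR.
        apply Rle_trans with ((INR l + 1) * INR m ^ 2 + INR l * INR k ^ 2).
        { apply Rplus_le_compat; auto. apply Rmult_le_compat_l; lra. }
        rewrite Hmk.
        assert (Hpoly : (INR l + 1) * INR l ^ 2 + INR l <= INR l ^ 4).
        { assert (INR l ^ 4 - ((INR l + 1) * INR l ^ 2 + INR l) = INR l * ((INR l - 2) * (INR l ^ 2 + INR l + 1) + 1)) by ring.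
          assert (0 <= (INR l - 2) * (INR l ^ 2 + INR l + 1)) by (apply Rmult_le_pos; nra).
          nra. }
        assert (0 <= INR k ^ 2) by (apply pow2_ge_0).
        replace ((INR l + 1) * (INR l * INR k) ^ 2 + INR l * INR k ^ 2) with
          (((INR l + 1) * INR l ^ 2 + INR l) * INR k ^ 2) by ring.
        replace ((INR l * INR k * INR l) ^ 2) with (INR l ^ 4 * INR k ^ 2) by ring.
        apply Rmult_le_compat_r; auto.
      * assert (Ea : a (m * l)%nat = (lam * a m)%C) by (rewrite <- Hh; ring).
        rewrite Ea. eapply Rle_trans; [exact Hlm|].
        assert (0 <= INR m ^ 2) by apply pow2_ge_0.
        replace ((INR m * INR l) ^ 2) with (INR l ^ 2 * INR m ^ 2) by ring.
        apply Rmult_le_compat_r; nra.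
Qed.

Lemma pow_diff_bound (q q' : C) r k : Cmod q <= r -> Cmod q' <= r ->
  Cmod (q' ^ k - q ^ k)%C <= INR k * r ^ (pred k) * Cmod (q' - q)%C.
Proof.
  intros Hq Hq'. assert (Hr : 0 <= r) by (pose proof (Cmod_ge_0 q); lra).
  assert (Hd : 0 <= Cmod (q' - q)%C) by apply Cmod_ge_0.
  induction k.
  - simpl. replace (1 - 1)%C with (RtoC 0) by ring. rewrite Cmod_0. lra.
  - replace (q' ^ S k - q ^ S k)%C with (q' * (q' ^ k - q ^ k) + q ^ k * (q' - q))%C by (simpl; ring).
    eapply Rle_trans; [apply Cmod_triangle|]. rewrite !Cmod_mult, Cmod_pow.
    assert (H1 : Cmod q' * Cmod (q' ^ k - q ^ k)%C <= r * (INR k * r ^ pred k * Cmod (q' - q)%C)).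
    { apply Rmult_le_compat; auto; apply Cmod_ge_0. }
    assert (H2 : Cmod q ^ k * Cmod (q' - q)%C <= r ^ k * Cmod (q' - q)%C).
    { apply Rmult_le_compat_r; auto. apply pow_incr. split; auto. apply Cmod_ge_0. }
    assert (H3 : r * (INR k * r ^ pred k) = INR k * r ^ k).
    { destruct k. simpl. ring. simpl pred. simpl. ring. }
    rewrite S_INR. simpl pred.
    replace ((INR k + 1) * r ^ k * Cmod (q' - q)%C) with (r * (INR k * r ^ pred k) * Cmod (q' - q)%C + r ^ k * Cmod (q' - q)%C)
      by (rewrite H3; ring).
    rewrite Rmult_assoc. lra.
Qed.

Definition Aser (r : R) := (1 + r) / (1 - r) ^ 3.

Lemma sum_sq_closed r n : 0 <= r < 1 ->
  sum_n (fun k => INR k ^ 2 * r ^ (pred k)) n =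
  Aser r - r ^ n * ((INR n + 1) ^ 2 - (2 * INR n ^ 2 + 2 * INR n - 1) * r + INR n ^ 2 * r ^ 2) / (1 - r) ^ 3.
Proof.
  intros Hr. assert (Hne : (1 - r) ^ 3 <> 0) by (apply pow_nonzero; lra).
  unfold Aser. induction n.
  - rewrite sum_O. simpl. field. lra.
  - rewrite sum_Sn. change (sum_n (fun k => INR k ^ 2 * r ^ pred k) n + INR (S n) ^ 2 * r ^ pred (S n) = 
      (1 + r) / (1 - r) ^ 3 - r ^ S n * ((INR (S n) + 1) ^ 2 - (2 * INR (S n) ^ 2 + 2 * INR (S n) - 1) * r + INR (S n) ^ 2 * r ^ 2) / (1 - r) ^ 3).
    rewrite IHn. rewrite S_INR. simpl pred. simpl pow. field. lra.
Qed.

Lemma sum_sq_bound r n : 0 <= r < 1 -> sum_n (fun k => INR k ^ 2 * r ^ (pred k)) n <= Aser r.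
Proof.
  intros Hr. rewrite sum_sq_closed by auto.
  assert (HQ : 0 <= (INR n + 1) ^ 2 - (2 * INR n ^ 2 + 2 * INR n - 1) * r + INR n ^ 2 * r ^ 2).
  { replace ((INR n + 1) ^ 2 - (2 * INR n ^ 2 + 2 * INR n - 1) * r + INR n ^ 2 * r ^ 2)
      with ((INR n + 1 - INR n * r) ^ 2 + r) by ring. pose proof (pow2_ge_0 (INR n + 1 - INR n * r)). lra. }
  assert (0 <= r ^ n) by (apply pow_le; lra).
  assert (0 < (1 - r) ^ 3) by (apply pow_lt; lra).
  assert (0 <= r ^ n * ((INR n + 1) ^ 2 - (2 * INR n ^ 2 + 2 * INR n - 1) * r + INR n ^ 2 * r ^ 2) / (1 - r) ^ 3).
  { apply Rdiv_le_0_compat; auto. apply Rmult_le_pos; auto. }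
  lra.
Qed.

Lemma coef_div_bound p a k : prime (Z.of_nat p) -> is_D1 p a -> Cmod (a k / RtoC (INR k))%C <= INR k.
Proof.
  intros Hpr HD. pose proof (coef_bound p a Hpr HD k) as H.
  destruct k.
  - destruct HD as [[Ha0 _] _]. rewrite Ha0. simpl. replace (0 / RtoC 0)%C with (RtoC 0) by (unfold Cdiv; ring).
    rewrite Cmod_0. lra.
  - assert (Hk : 0 < INR (S k)) by (apply lt_0_INR; lia).
    assert (Hk' : RtoC (INR (S k)) <> 0%C) by (intro H0; apply (f_equal Re) in H0; rewrite !re_RtoC in H0; lra).
    rewrite Cmod_div, Cmod_INR by auto.
    apply (Rmult_le_reg_r (INR (S k))); auto. unfold Rdiv. rewrite Rmult_assoc, Rinv_l by lra. nra.
Qed.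

Lemma term_bound p a q r k : prime (Z.of_nat p) -> is_D1 p a -> Cmod q <= r -> r <= 1 ->
  Cmod (a k / RtoC (INR k) * q ^ k)%C <= INR k ^ 2 * r ^ (pred k).
Proof.
  intros Hpr HD Hq Hr1. assert (Hr : 0 <= r) by (pose proof (Cmod_ge_0 q); lra).
  rewrite Cmod_mult, Cmod_pow. pose proof (coef_div_bound p a k Hpr HD) as H.
  assert (Hp : Cmod q ^ k <= r ^ k) by (apply pow_incr; split; auto; apply Cmod_ge_0).
  assert (Hk : INR k * r ^ k <= INR k ^ 2 * r ^ pred k).
  { destruct k. simpl. lra.
    replace (pred (S k)) with k by reflexivity. replace (r ^ S k) with (r * r ^ k) by (simpl; ring).
    rewrite S_INR.
    assert (0 <= INR k) by apply pos_INR. assert (0 <= r ^ k) by (apply pow_le; auto).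
    assert (0 <= (INR k + 1) * r ^ k) by (apply Rmult_le_pos; lra).
    replace ((INR k + 1) * (r * r ^ k)) with (((INR k + 1) * r ^ k) * r) by ring.
    replace ((INR k + 1) ^ 2 * r ^ k) with (((INR k + 1) * r ^ k) * (INR k + 1)) by ring.
    apply Rmult_le_compat_l; lra. }
  assert (0 <= Cmod q ^ k) by (apply pow_le; apply Cmod_ge_0).
  assert (0 <= INR k) by apply pos_INR.
  apply Rle_trans with (INR k * r ^ k); auto.
  apply Rmult_le_compat; auto. apply Cmod_ge_0.
Qed.

Lemma mu_series p a q r : prime (Z.of_nat p) -> is_D1 p a -> Cmod q <= r -> 0 <= r < 1 ->
  is_series (fun k => (a k / RtoC (INR k) * q ^ k)%C) (mu_inf a q).
Proof.
  intros Hpr HD Hq Hr. unfold mu_inf. apply ex_csum.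
  apply (@ex_series_le C_AbsRing C_CompleteNormedModule _ (fun k => INR k ^ 2 * r ^ (pred k))).
  - intros k. change (Cmod (a k / RtoC (INR k) * q ^ k)%C <= INR k ^ 2 * r ^ pred k). apply (term_bound p a q r k Hpr HD Hq). lra.
  - apply (ex_series_bounded _ (Aser r)).
    + intros k. apply Rmult_le_pos; [apply pow2_ge_0| apply pow_le; lra].
    + intros n. apply sum_sq_bound; auto.
Qed.

Lemma mu_lip p a q q' r : prime (Z.of_nat p) -> is_D1 p a -> Cmod q <= r -> Cmod q' <= r -> 0 <= r < 1 ->
  Cmod (mu_inf a q' - mu_inf a q)%C <= Aser r * Cmod (q' - q)%C.
Proof.
  intros Hpr HD Hq Hq' Hr.
  pose proof (is_series_minus _ _ _ _ (mu_series p a q' r Hpr HD Hq' Hr) (mu_series p a q r Hpr HD Hq Hr)) as S.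
  apply (Cmod_series_bound _ (fun k => INR k ^ 2 * r ^ (pred k) * Cmod (q' - q)%C) _ _ S).
  - intros k. change (Cmod (a k / RtoC (INR k) * q' ^ k + - (a k / RtoC (INR k) * q ^ k))%C <= INR k ^ 2 * r ^ pred k * Cmod (q' - q)%C).
    replace (a k / RtoC (INR k) * q' ^ k + - (a k / RtoC (INR k) * q ^ k))%C with
      (a k / RtoC (INR k) * (q' ^ k - q ^ k))%C by ring.
    rewrite Cmod_mult. pose proof (coef_div_bound p a k Hpr HD) as H1.
    pose proof (pow_diff_bound q q' r k Hq Hq') as H2.
    assert (0 <= INR k) by apply pos_INR.
    apply Rle_trans with (INR k * (INR k * r ^ pred k * Cmod (q' - q)%C)).
    + apply Rmult_le_compat; auto; apply Cmod_ge_0.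
    + right. ring.
  - intros n. rewrite (sum_n_mult_r (K := R_Ring)).
    change (mult (sum_n (fun k => INR k ^ 2 * r ^ pred k) n) (Cmod (q' - q)%C)) with
      (sum_n (fun k => INR k ^ 2 * r ^ pred k) n * Cmod (q' - q)%C).
    apply Rmult_le_compat_r. apply Cmod_ge_0. apply sum_sq_bound; auto.
Qed.

Lemma Aser_le r B : 0 <= r < 1 -> 1 + r <= B * (1 - r) ^ 3 -> Aser r <= B.
Proof.
  intros Hr H. assert (Hp : 0 < (1 - r) ^ 3) by (apply pow_lt; lra).
  unfold Aser. apply (Rmult_le_reg_r ((1 - r) ^ 3)); auto.
  unfold Rdiv. rewrite Rmult_assoc, Rinv_l; lra.
Qed.

Lemma part_inf p a q q' : prime (Z.of_nat p) -> is_D1 p a -> Cmod q < 1 / 100 -> Cmod q' < 1 / 100 ->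
  Cmod (mu_inf a q' - mu_inf a q)%C <= 7 * Cmod (q' - q)%C.
Proof.
  intros Hpr HD Hq Hq'. set (r := Rmax (Cmod q) (Cmod q')).
  assert (Hr1 : Cmod q <= r) by apply Rmax_l. assert (Hr2 : Cmod q' <= r) by apply Rmax_r.
  assert (Hr3 : r < 1 / 100) by (unfold r; apply Rmax_lub_lt; auto).
  assert (Hr0 : 0 <= r) by (pose proof (Cmod_ge_0 q); lra).
  eapply Rle_trans; [apply (mu_lip p a q q' r Hpr HD Hr1 Hr2); lra|].
  apply Rmult_le_compat_r; [apply Cmod_ge_0|].
  apply Aser_le; [lra|].
  assert (h1 : 99/100 <= 1 - r) by lra.
  assert (h2 : (99/100)^3 <= (1-r)^3) by (apply pow_incr; lra).
  lra.
Qed.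

Lemma part_zero p a q q' : prime (Z.of_nat p) -> is_D1 p a ->
  Cmod q < 1 - 1 / (2 * INR p) -> Cmod q' < 1 - 1 / (2 * INR p) ->
  Cmod (mu_0 p a q' - mu_0 p a q)%C <= 96 * INR p ^ 4 * Cmod (q' - q)%C.
Proof.
  intros Hpr HD Hq Hq'.
  assert (HP : 2 <= INR p) by (apply (le_INR 2); apply p_pos; auto).
  assert (E : (mu_0 p a q' - mu_0 p a q)%C = (RtoC (al_sign p a) * (mu_inf a q' - mu_inf a q))%C)
    by (unfold mu_0, mu_inf; ring).
  rewrite E, Cmod_mult, Cmod_R.
  assert (Hs : Rabs (al_sign p a) = 1).
  { unfold al_sign. destruct (excluded_middle_informative _).
    - apply Rabs_R1.
    - unfold Rabs; destruct (Rcase_abs _); lra. }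
  rewrite Hs, Rmult_1_l.
  set (r := Rmax (Cmod q) (Cmod q')).
  assert (Hr1 : Cmod q <= r) by apply Rmax_l. assert (Hr2 : Cmod q' <= r) by apply Rmax_r.
  assert (Hr3 : r < 1 - 1 / (2 * INR p)) by (unfold r; apply Rmax_lub_lt; auto).
  assert (Hr0 : 0 <= r) by (pose proof (Cmod_ge_0 q); lra).
  assert (Hpos : 0 < 1 / (2 * INR p)) by (apply Rdiv_lt_0_compat; lra).
  eapply Rle_trans; [apply (mu_lip p a q q' r Hpr HD Hr1 Hr2); lra|].
  apply Rmult_le_compat_r; [apply Cmod_ge_0|].
  apply Aser_le; [lra|].
  assert (h2 : (1 / (2 * INR p)) ^ 3 <= (1 - r) ^ 3) by (apply pow_incr; lra).
  assert (h3 : 0 <= 96 * INR p ^ 4) by (apply Rmult_le_pos; [lra| apply pow_le; lra]).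
  apply Rmult_le_compat_l with (r := 96 * INR p ^ 4) in h2; auto.
  replace (96 * INR p ^ 4 * (1 / (2 * INR p)) ^ 3) with (12 * INR p) in h2 by (field; lra).
  assert (1 / (2 * INR p) <= 1) by (apply (Rmult_le_reg_r (2 * INR p)); [lra|]; unfold Rdiv; rewrite Rmult_assoc, Rinv_l; lra).
  lra.
Qed.

Theorem mainTheorem5 (p : nat) :
  prime (Z.of_nat p) -> (1 <= genus_X0 p)%nat ->
  (forall a : nat -> C, is_D1 p a ->
     forall q q' : C, Cmod q < 1 / 100 -> Cmod q' < 1 / 100 ->
       Cmod (mu_inf a q' - mu_inf a q) <= 7 * Cmod (q' - q)) /\
  (forall a : nat -> C, is_D1 p a ->
     forall q q' : C, Cmod q < 1 - 1 / (2 * INR p) -> Cmod q' < 1 - 1 / (2 * INR p) ->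
       Cmod (mu_0 p a q' - mu_0 p a q) <= 96 * INR p ^ 4 * Cmod (q' - q)) /\
  (forall a : nat -> C, is_D1 p a ->
     forall q q' : C, Cmod q < 1 / 200 -> Cmod q' < 1 / 200 ->
       Cmod (mu_inf a q' - mu_inf a q) <= 7 * Cmod (q' - q)) /\
  (forall a : nat -> C, is_D1 p a ->
     forall q q' : C, Cmod q < 1 - 1 / INR p -> Cmod q' < 1 - 1 / INR p ->
       Cmod (mu_0 p a q' - mu_0 p a q) <= 96 * INR p ^ 4 * Cmod (q' - q)).
Proof.
  intros Hpr _.
  assert (HP : 2 <= INR p) by (apply (le_INR 2); apply p_pos; auto).
  assert (Hcmp : 1 - 1 / INR p <= 1 - 1 / (2 * INR p)).
  { assert (1 / (2 * INR p) <= 1 / INR p).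
    { unfold Rdiv. rewrite !Rmult_1_l. apply Rinv_le_contravar; lra. }
    lra. }
  split; [|split; [|split]].
  - intros a HD q q' Hq Hq'. apply (part_inf p a q q' Hpr HD Hq Hq').
  - intros a HD q q' Hq Hq'. apply (part_zero p a q q' Hpr HD Hq Hq').
  - intros a HD q q' Hq Hq'. apply (part_inf p a q q' Hpr HD); lra.
  - intros a HD q q' Hq Hq'. apply (part_zero p a q q' Hpr HD); lra.
Qed.
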